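(* Let $G$ be a finite group. The following are equivalent: (1) the set $\{\ker\chi : \chi\in\mathrm{Irr}(G),\ \chi(1)>1\}$ of kernels of the nonlinear irreducible characters of $G$ is totally ordered by inclusion; (2) for every normal subgroup $M$ of $G$ with $1\le M< G'$, either (a) $G'/M$ is not a chief factor of $G$ and $G/M$ has a unique minimal normal subgroup, or (b) $G'/M$ is a chief factor of $G$ and $G/M$ has at most two minimal normal subgroups.
   Context: All groups are finite. $\mathrm{Irr}(G)$ denotes the set of complex irreducible characters of $G$, $\ker\chi=\{g\in G:\chi(g)=\chi(1)\}$, and $G'$ is the derived subgroup. *)

(* Defs.v *)
From HB Require Import structures.
From mathcomp Require Import all_boot all_order all_algebra all_fingroup all_solvable all_field all_character.
Set Implicit Arguments. Unset Strict Implicit. Unset Printing Implicit Defensive.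

Definition min_normals (gT : finGroupType) (H : {set gT}) : {set {group gT}} :=
  [set A : {group gT} | minnormal A H && (A \subset H)].

(* Main.v *)
Require Import Defs.
From HB Require Import structures.
From mathcomp Require Import all_boot all_order all_algebra all_fingroup all_solvable all_field all_character.
Import GRing.Theory Num.Theory.
Set Implicit Arguments. Unset Strict Implicit. Unset Printing Implicit Defensive.

Section Core.
Local Open Scope group_scope.
Local Open Scope ring_scope.
Variables (rT : finGroupType) (H : {group rT}).
Local Notation D := (H^`(1))%g.

Lemma nonlinE (i : Iirr H) :
  (1 < 'chi[H]_i 1%g) = ~~ (D \subset cfker 'chi[H]_i).
Proof.
rewrite -lin_irr_der1 qualifE /= /linear_char_pred irr_char /=.
have /natrP[n Hn] := Cnat_irr1 i.
have := irr1_gt0 i; rewrite Hn ltr0n ltr1n pnatr_eq1.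
by case: n {Hn} => [|[|n]].
Qed.


Lemma sep (L : {group rT}) (X : {set rT}) :
  L <| H -> ~~ (X \subset L) ->
  exists i : Iirr H, (L \subset cfker 'chi[H]_i) && ~~ (X \subset cfker 'chi[H]_i).
Proof.
move=> nsLH nXL; apply/existsP; apply: contraR nXL; rewrite negb_exists => /forallP Hi.
rewrite -(cap_cfker_normal nsLH); apply/bigcapsP => i sL.
by have := Hi i; rewrite sL /= negbK.
Qed.

Lemma twist (i l : Iirr H) : D \subset cfker 'chi[H]_l ->
  exists k : Iirr H,
    [/\ cfker 'chi[H]_i :&: cfker 'chi[H]_l \subset cfker 'chi[H]_k,
        (1 < 'chi[H]_k 1%g) = (1 < 'chi[H]_i 1%g) &
        forall x, x \in cfker 'chi[H]_i -> x \notin cfker 'chi[H]_l ->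
                  x \notin cfker 'chi[H]_k].
Proof.
move=> sDl; have Ll : 'chi[H]_l \is a linear_char by rewrite lin_irr_der1.
have /irrP[k Hk] := mul_lin_irr Ll (mem_irr i).
exists k; split.
- by rewrite -Hk setIC cfker_mul.
- by rewrite -Hk cfunE lin_char1 // mul1r.
move=> x kix; apply: contra; rewrite !cfkerEirr !inE -Hk !cfunE lin_char1 // mul1r.
rewrite (cfker1 kix) -{2}['chi_i 1%g]mul1r => /eqP/(mulIf (irr1_neq0 i)) ->.
by rewrite eqxx.
Qed.

Lemma mn_eq (X Y : {group rT}) : minnormal Y H -> X :!=: 1%g ->
  H \subset 'N(X) -> X \subset Y -> X :=: Y.
Proof.
by case/mingroupP=> _ minY ntX nXH sXY; apply: minY; rewrite ?ntX.
Qed.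

Lemma mnP (N : {group rT}) : N \in min_normals H = minnormal N H && (N \subset H).
Proof. by rewrite inE. Qed.

Lemma mn_exists (X : {group rT}) : X :!=: 1%g -> H \subset 'N(X) -> X \subset H ->
  exists2 N : {group rT}, N \in min_normals H & N \subset X.
Proof.
move=> ntX nXH sXH; have [N mN sNX] := minnormal_exists ntX nXH.
by exists N => //; rewrite mnP mN (subset_trans sNX).
Qed.

Lemma mn_ntriv (N : {group rT}) : N \in min_normals H -> N :!=: 1%g.
Proof. by rewrite mnP => /andP[/mingroupp/andP[]]. Qed.

Lemma mn_norm (N : {group rT}) : N \in min_normals H -> N <| H.
Proof.
by rewrite mnP /normal => /andP[/mingroupp/andP[_ ->] ->].
Qed.


Definition chainP := forall i j : Iirr H,
  1 < 'chi[H]_i 1%g -> 1 < 'chi[H]_j 1%g ->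
  (cfker 'chi[H]_i \subset cfker 'chi[H]_j) || (cfker 'chi[H]_j \subset cfker 'chi[H]_i).

Lemma incomp (X Y : {set rT}) (i j : Iirr H) : chainP ->
  ~~ (D \subset cfker 'chi[H]_i) -> ~~ (D \subset cfker 'chi[H]_j) ->
  X \subset cfker 'chi[H]_i -> ~~ (Y \subset cfker 'chi[H]_i) ->
  Y \subset cfker 'chi[H]_j -> ~~ (X \subset cfker 'chi[H]_j) -> False.
Proof.
move=> Hch ni nj Xi Yi Yj Xj.
have := Hch i j; rewrite !nonlinE => /(_ ni nj) /orP[] sij.
  by move/negP: Xj; apply; apply: subset_trans sij.
by move/negP: Yi; apply; apply: subset_trans sij.
Qed.

Lemma twist2 (A N : {set rT}) (i0 l : Iirr H) :
  ~~ (D \subset cfker 'chi[H]_i0) -> A \subset cfker 'chi[H]_i0 ->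
  D \subset cfker 'chi[H]_l -> A \subset cfker 'chi[H]_l -> ~~ (N \subset cfker 'chi[H]_l) ->
  exists j : Iirr H, [/\ ~~ (D \subset cfker 'chi[H]_j), A \subset cfker 'chi[H]_j
                        & ~~ (N \subset cfker 'chi[H]_j)].
Proof.
move=> ni0 Ai0 Dl Al Nl.
case: (boolP (N \subset cfker 'chi[H]_i0)) => Ni0; last by exists i0.
have [k [sk dk nk]] := twist i0 Dl.
exists k; split.
- by rewrite -nonlinE dk nonlinE.
- by apply: subset_trans sk; rewrite subsetI Ai0.
have [x Nx nxl] := subsetPn Nl.
by apply/subsetPn; exists x => //; apply: nk => //; apply: (subsetP Ni0).
Qed.

Lemma mn_min (N : {group rT}) : N \in min_normals H -> minnormal N H.
Proof. by rewrite mnP => /andP[]. Qed.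

Lemma mn_sub_eq (X Y : {group rT}) : Y \in min_normals H -> X \in min_normals H ->
  X \subset Y -> X :=: Y.
Proof.
move=> mY mX sXY; have /andP[_ nX] := mn_norm mX.
exact: mn_eq (mn_min mY) (mn_ntriv mX) nX sXY.
Qed.

Lemma nl_of (X : {set rT}) (k : Iirr H) : X \subset D -> ~~ (X \subset cfker 'chi[H]_k) ->
  ~~ (D \subset cfker 'chi[H]_k).
Proof. by move=> sXD; apply: contra => /(subset_trans sXD). Qed.

Lemma lemC1 (N1 N2 : {group rT}) : chainP ->
  N1 \in min_normals H -> N2 \in min_normals H -> N1 \subset D -> N2 \subset D ->
  N1 :=: N2.
Proof.
move=> Hch m1 m2 s1 s2; apply/eqP; apply/negPn/negP => neq.
have nsub (X Y : {group rT}) : X \in min_normals H -> Y \in min_normals H ->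
    X :!=: Y -> ~~ (Y \subset X).
  move=> mX mY nXY; apply: contra nXY => sYX; apply/eqP/esym.
  have mX' : minnormal X H by move: mX; rewrite mnP => /andP[].
  have /andP[_ nY] := mn_norm mY.
  exact: mn_eq mX' (mn_ntriv mY) nY sYX.
have [i /andP[N1i N2i]] := sep (mn_norm m1) (nsub _ _ m1 m2 neq).
have [j /andP[N2j N1j]] := sep (mn_norm m2) (nsub _ _ m2 m1 ltac:(by rewrite eq_sym)).
have nl (X : {group rT}) (k : Iirr H) : X \subset D -> ~~ (X \subset cfker 'chi[H]_k) ->
  ~~ (D \subset cfker 'chi[H]_k).
  by move=> sXD; apply: contra => /(subset_trans sXD).
exact: (incomp Hch (nl _ _ s2 N2i) (nl _ _ s1 N1j) N1i N2i N2j N1j).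
Qed.

Lemma lemC2 (N A : {group rT}) : chainP ->
  N \in min_normals H -> A \in min_normals H -> A \subset D -> ~~ (N \subset D) ->
  A :=: D.
Proof.
move=> Hch mN mA sAD nND; apply/eqP; rewrite eqEsubset sAD /=.
apply/negPn/negP => nDA.
have nAN : ~~ (A \subset N).
  by apply: contra nND => sAN; rewrite -(mn_sub_eq mN mA sAN).
have [i /andP[Ni Ai]] := sep (mn_norm mN) nAN.
have [i0 /andP[Ai0 Di0]] := sep (mn_norm mA) nDA.
have [l /andP[Dl Nl]] := sep (der_normal 1 H) nND.
have [j [nj Aj Nj]] := twist2 Di0 Ai0 Dl (subset_trans sAD Dl) Nl.
exact: (incomp Hch (nl_of sAD Ai) nj Ni Ai Aj Nj).
Qed.

Lemma build (Na Nb : {group rT}) :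
  (H^`(1))%G \in min_normals H ->
  Na \in min_normals H -> Nb \in min_normals H -> ~~ (Na \subset D) -> Na :!=: Nb ->
  exists j : Iirr H, [/\ ~~ (D \subset cfker 'chi[H]_j), Na \subset cfker 'chi[H]_j
                        & ~~ (Nb \subset cfker 'chi[H]_j)].
Proof.
move=> mD mNa mNb nNaD neq.
have nDNa : ~~ (D \subset Na).
  by apply: contra nNaD => sDNa; rewrite -(mn_sub_eq mNa mD sDNa).
have [i0 /andP[Nai0 Di0]] := sep (mn_norm mNa) nDNa.
case: (boolP (Nb \subset cfker 'chi[H]_i0)) => Nbi0; last by exists i0.
have nsL : (Na <*> H^`(1))%G <| H := normalY (mn_norm mNa) (der_normal 1 H).
have nNbL : ~~ (Nb \subset Na <*> H^`(1)).
  apply/negP => sNbL.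
  have nNaD' : D \subset 'N(Na).
    by have /andP[_ nNa] := mn_norm mNa; apply: subset_trans (der_sub 1 H) nNa.
  have DK1 : D :&: cfker 'chi[H]_i0 = 1%g.
    apply/eqP; apply/negPn/negP => nt.
    have nDK : H \subset 'N(D :&: cfker 'chi[H]_i0).
      by rewrite normsI ?normal_norm ?der_normal ?cfker_normal.
    have eqD := @mn_eq [group of D :&: cfker 'chi[H]_i0] (H^`(1))%G (mn_min mD) nt nDK (subsetIl _ _).
    by move/negP: Di0; apply; rewrite -eqD subsetIr.
  have sNbNa : Nb \subset Na.
    have: Nb \subset (Na * D)%g :&: cfker 'chi[H]_i0.
      by rewrite subsetI -norm_joinEr // sNbL Nbi0.
    by rewrite -group_modl // DK1 mulg1.
  by move/negP: neq; apply; rewrite (mn_sub_eq mNa mNb sNbNa).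
have [l /andP[Ll Nbl]] := sep nsL nNbL.
have Dl : D \subset cfker 'chi[H]_l by apply: subset_trans Ll; apply: joing_subr.
have Nal : Na \subset cfker 'chi[H]_l by apply: subset_trans Ll; apply: joing_subl.
exact: twist2 Di0 Nai0 Dl Nal Nbl.
Qed.

Lemma forward : chainP -> D :!=: 1%g ->
  (~~ minnormal D H -> #|min_normals H| = 1%N) /\
  (minnormal D H -> #|min_normals H| <= 2)%N.
Proof.
move=> Hch ntD.
have [A0 mA0 sA0D] := mn_exists ntD (normal_norm (der_normal 1 H)) (der_sub 1 H).
split.
  move=> nmD; suff ->: min_normals H = [set A0] by rewrite cards1.
  apply/eqP; rewrite eqEsubset sub1set mA0 andbT; apply/subsetP => N mN.
  rewrite inE; case: (boolP (N \subset D)) => sND.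
    by apply/eqP; apply: group_inj; exact: lemC1 Hch mN mA0 sND sA0D.
  have eqA := lemC2 Hch mN mA0 sA0D sND.
  by case/negP: nmD; rewrite -eqA; exact: mn_min mA0.
move=> mD0.
have mD : (H^`(1))%G \in min_normals H by rewrite mnP mD0 der_sub.
have C3 (N N0 : {group rT}) : N \in min_normals H -> N0 \in min_normals H ->
    ~~ (N \subset D) -> ~~ (N0 \subset D) -> N = N0.
  move=> mN mN0 nND nN0D; apply/eqP/negPn/negP => neq.
  have [j1 [nj1 Nj1 N0j1]] := build mD mN mN0 nND neq.
  have [j2 [nj2 N0j2 Nj2]] := build mD mN0 mN nN0D ltac:(by rewrite eq_sym).
  exact: (incomp Hch nj1 nj2 Nj1 N0j1 N0j2 Nj2).
case: (pickP [pred N : {group rT} | (N \in min_normals H) && ~~ (N \subset D)]).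
  move=> N0 /andP[mN0 nN0D].
  apply: leq_trans (subset_leq_card (_ : min_normals H \subset [set (H^`(1))%G; N0])) _.
    apply/subsetP => N mN; rewrite !inE; case: (boolP (N \subset D)) => sND.
      by apply/orP; left; apply/eqP; apply: group_inj; exact: lemC1 Hch mN mD sND (subxx _).
    by rewrite (C3 _ _ mN mN0 sND nN0D) eqxx orbT.
  by rewrite cards2; case: (_ != _).
move=> none.
apply: leq_trans (subset_leq_card (_ : min_normals H \subset [set (H^`(1))%G])) _.
  apply/subsetP => N mN; rewrite !inE.
  have := none N; rewrite /= mN /= => /negbFE sND.
  by apply/eqP; apply: group_inj; exact: lemC1 Hch mN mD sND (subxx _).
by rewrite cards1.
Qed.

Lemma two_card (S : {set {group rT}}) (a b : {group rT}) :
  a \in S -> b \in S -> a != b -> (2 <= #|S|)%N.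
Proof.
move=> aS bS nab.
have sub : [set a; b] \subset S by apply/subsetP => y; rewrite !inE => /orP[]/eqP->.
by have := subset_leq_card sub; rewrite cards2 nab.
Qed.

Lemma in_two (S : {set {group rT}}) (a b x : {group rT}) :
  a \in S -> b \in S -> a != b -> (#|S| <= 2)%N -> x \in S -> (x == a) || (x == b).
Proof.
move=> aS bS nab cS xS.
have sub : [set a; b] \subset S by apply/subsetP => y; rewrite !inE => /orP[]/eqP->.
have : [set a; b] == S by rewrite eqEcard sub cards2 nab.
by move/eqP => eS; move: xS; rewrite -eS !inE.
Qed.

Lemma sub_center (K : {group rT}) : K <| H -> K :&: D = 1%g -> K \subset 'Z(H).
Proof.
move=> /andP[sKH nKH] KD1; rewrite subsetI sKH /=; apply/commG1P/eqP.
rewrite -subG1 -KD1 subsetI commg_subl nKH /= derg1.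
exact: commgSS.
Qed.

Lemma caseB (i j : Iirr H) :
  ~~ (D \subset cfker 'chi[H]_i) -> ~~ (D \subset cfker 'chi[H]_j) ->
  ~~ (cfker 'chi[H]_i \subset cfker 'chi[H]_j) ->
  ~~ (cfker 'chi[H]_j \subset cfker 'chi[H]_i) ->
  cfker 'chi[H]_i :&: D = 1%g ->
  (~~ minnormal D H /\ #|min_normals H| = 1%N) \/
  (minnormal D H /\ (#|min_normals H| <= 2)%N) -> False.
Proof.
move=> ni nj nij nji K1D Hyp.
have ntK1 : [group of cfker 'chi[H]_i] :!=: 1%g.
  by apply: contra nij => /eqP /= ->; apply: sub1G.
have nsK1 := cfker_normal 'chi[H]_i.
have [B mB sBK1] := mn_exists ntK1 (normal_norm nsK1) (cfker_sub _).
have ntD : (H^`(1))%G :!=: 1%g by apply: contra ni => /eqP /= ->; apply: sub1G.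
have [A mA sAD] := mn_exists ntD (normal_norm (der_normal 1 H)) (der_sub 1 H).
have nBD : ~~ (B \subset D).
  by apply: contra (mn_ntriv mB) => sBD; rewrite -subG1 -K1D subsetI sBK1 sBD.
have nAB : A != B.
  apply: contra (mn_ntriv mA) => /eqP eAB.
  by rewrite -subG1 -K1D subsetI sAD andbT eAB sBK1.
case: Hyp => [[_ c1]|[mD0 c2]].
  by have := two_card mA mB nAB; rewrite c1.
have mD : (H^`(1))%G \in min_normals H by rewrite mnP mD0 der_sub.
have nDB : (H^`(1))%G != B by apply: contra nBD => /eqP <-; apply: subxx.
have only N : N \in min_normals H -> (N == (H^`(1))%G) || (N == B).
  exact: in_two mD mB nDB c2.
have K2D : cfker 'chi[H]_j :&: D = 1%g.
  apply/eqP; apply/negPn/negP => nt.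
  have nDK : H \subset 'N(cfker 'chi[H]_j :&: D).
    by rewrite normsI ?normal_norm ?der_normal ?cfker_normal.
  have eqD := @mn_eq [group of cfker 'chi[H]_j :&: D] (H^`(1))%G mD0 nt nDK (subsetIr _ _).
  by move/negP: nj; apply; rewrite -eqD subsetIl.
have hK (K : {group rT}) : K <| H -> K :&: D = 1%g -> K :!=: 1%g ->
    [/\ K \subset 'Z(H), B \subset K & (#|B|).-group K].
  move=> nsK KD1 ntK; have zK := sub_center nsK KD1.
  have nDK : ~~ (D \subset K).
    by apply: contra ntD => sDK; rewrite -subG1 -KD1 subsetI sDK subxx.
  have [N mN sNK] := mn_exists ntK (normal_norm nsK) (normal_sub nsK).
  split => //.
    by case/orP: (only N mN) => /eqP eN; rewrite eN in sNK => //; case/negP: nDK.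
  apply/pgroupP => q pq qK; have [x Kx ox] := Cauchy pq qK.
  have sXK : <[x]> \subset K by rewrite cycle_subG.
  have nXH : H \subset 'N(<[x]>).
    apply: cents_norm; rewrite centsC; apply: subset_trans (subset_trans sXK zK) _.
    exact: subsetIr.
  have ntX : <[x]>%G :!=: 1%g.
    rewrite /= cycle_eq1; apply: contraTneq pq => x1.
    by rewrite -ox x1 order1.
  have mX : <[x]>%G \in min_normals H.
    rewrite mnP (subset_trans sXK (normal_sub nsK)) andbT.
    apply/mingroupP; split; first by rewrite ntX nXH.
    move=> Y /andP[ntY nYH] sYX; apply/eqP; rewrite eqEcard sYX /=.
    have := cardSg sYX; rewrite -orderE ox.
    have nY1 : #|Y| != 1%N by rewrite -trivg_card1.
    by move/(prime_nt_dvdP pq nY1) ->.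
  case/orP: (only _ mX) => /eqP eX.
    by case/negP: nDK; rewrite -[D]/(gval (H^`(1))%G) -eX.
  by rewrite -eX /= -orderE ox !inE.
have [l /andP[Dl Bl]] := sep (der_normal 1 H) nBD.
have [k [sk dk nk]] := twist i Dl.
have nk' : ~~ (D \subset cfker 'chi[H]_k) by rewrite -nonlinE dk nonlinE.
have k1 : [group of cfker 'chi[H]_k] :==: 1%g.
  apply/negPn/negP => ntk.
  have [N mN sNk] := mn_exists ntk (normal_norm (cfker_normal _)) (cfker_sub _).
  case/orP: (only N mN) => /eqP eN; rewrite eN in sNk.
    by case/negP: nk'.
  have [x Bx nxl] := subsetPn Bl.
  by have := nk x (subsetP sBK1 x Bx) nxl; rewrite (subsetP sNk x Bx).
have cyc : cyclic 'Z(H).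
  by apply: (@irr_faithful_center _ _ k); rewrite cfaithfulE (eqP k1).
have [zK1 _ pK1] := hK _ nsK1 K1D ntK1.
have ntK2 : [group of cfker 'chi[H]_j] :!=: 1%g.
  by apply: contra nji => /eqP /= ->; apply: sub1G.
have [zK2 _ pK2] := hK _ (cfker_normal _) K2D ntK2.
have e1 := card_pgroup pK1; have e2 := card_pgroup pK2.
case: (leqP (logn #|B| #|cfker 'chi[H]_i|) (logn #|B| #|cfker 'chi[H]_j|)) => le.
  by case/negP: nij; rewrite -(cardSg_cyclic cyc zK1 zK2) e1 e2 dvdn_exp2l.
by case/negP: nji; rewrite -(cardSg_cyclic cyc zK2 zK1) e1 e2 dvdn_exp2l // ltnW.
Qed.

Lemma backward (i j : Iirr H) :
  ~~ (D \subset cfker 'chi[H]_i) -> ~~ (D \subset cfker 'chi[H]_j) ->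
  ~~ (cfker 'chi[H]_i \subset cfker 'chi[H]_j) ->
  ~~ (cfker 'chi[H]_j \subset cfker 'chi[H]_i) ->
  cfker 'chi[H]_i :&: cfker 'chi[H]_j :&: D \subset [1] ->
  (~~ minnormal D H /\ #|min_normals H| = 1%N) \/
  (minnormal D H /\ (#|min_normals H| <= 2)%N) -> False.
Proof.
move=> ni nj nij nji I1 Hyp.
case: (boolP (cfker 'chi[H]_i :&: D :==: 1%g)) => [/eqP|] K1D.
  exact: caseB ni nj nij nji K1D Hyp.
case: (boolP (cfker 'chi[H]_j :&: D :==: 1%g)) => [/eqP|] K2D.
  exact: caseB nj ni nji nij K2D Hyp.
have nsI (k : Iirr H) : H \subset 'N(cfker 'chi[H]_k :&: D).
  by rewrite normsI ?normal_norm ?der_normal ?cfker_normal.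
have sI (k : Iirr H) : cfker 'chi[H]_k :&: D \subset H.
  by rewrite subIset // cfker_sub.
have [B1 mB1 sB1] := @mn_exists [group of cfker 'chi[H]_i :&: D] K1D (nsI i) (sI i).
have [B2 mB2 sB2] := @mn_exists [group of cfker 'chi[H]_j :&: D] K2D (nsI j) (sI j).
have nB : B1 != B2.
  apply: contra (mn_ntriv mB1) => /eqP eB; rewrite -subG1.
  apply: subset_trans I1; move: sB1 sB2; rewrite eB /= !subsetI.
  by case/andP => -> -> /andP[-> _].
case: Hyp => [[_ c1]|[mD0 _]].
  by have := two_card mB1 mB2 nB; rewrite c1.
have eqD := @mn_eq [group of cfker 'chi[H]_i :&: D] (H^`(1))%G mD0 K1D (nsI i) (subsetIr _ _).
by move/negP: ni; apply; rewrite -eqD subsetIl.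
Qed.

End Core.

Section Aux.
Local Open Scope group_scope.
Lemma chief_minnormal (gT : finGroupType) (G M : {group gT}) :
  M <| G -> M \subset G^`(1) ->
  chief_factor G M G^`(1) = minnormal ((G / M)%G)^`(1) (G / M).
Proof.
move=> nsMG sMD; have nMG := normal_norm nsMG.
have nsMD : M <| G^`(1) := normalS sMD (der_sub 1 G) nsMG.
have qD : (G^`(1) / M)%g = ((G / M)^`(1))%g := quotient_der 1 nMG.
apply/idP/idP.
  by move/chief_factor_minnormal; rewrite qD.
move=> mn; rewrite /chief_factor der_normal andbT.
by apply: minnormal_maxnormal nsMD nMG _; rewrite qD.
Qed.

End Aux.

Theorem theorem1p2 (gT : finGroupType) (G : {group gT}) :
  (forall i j : Iirr G,
      (1 < 'chi[G]_i 1%g)%R -> (1 < 'chi[G]_j 1%g)%R ->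
      (cfker ('chi[G]_i)%R \subset cfker ('chi[G]_j)%R) ||
      (cfker ('chi[G]_j)%R \subset cfker ('chi[G]_i)%R))
  <->
  (forall M : {group gT}, (M <| G)%g -> (M \proper G^`(1))%g ->
      (~~ chief_factor G M G^`(1)%g /\ #|min_normals (G / M)%g| = 1%N)
      \/ (chief_factor G M G^`(1)%g /\ (#|min_normals (G / M)%g| <= 2)%N)).
Proof.
split.
- move=> Hch M nsMG ltMD.
  have sMD := proper_sub ltMD; have nMG := normal_norm nsMG.
  have nsMD : (M <| G^`(1))%g := normalS sMD (der_sub 1 G) nsMG.
  have qD : (G^`(1) / M)%g = ((G / M)^`(1))%g := quotient_der 1 nMG.
  have qk (k : Iirr (G / M)) :
      cfker ('chi[(G / M)%G]_k)%R = (cfker ('chi[G]_(mod_Iirr k))%R / M)%g.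
    by rewrite mod_IirrE // (@quotient_cfker_mod _ _ set0).
  have chainQ : chainP (G / M)%G.
    move=> i j ni nj.
    have := Hch (mod_Iirr i) (mod_Iirr j); rewrite !mod_IirrE // !cfMod1.
    move=> /(_ ni nj) /orP[] s; apply/orP; [left|right];
      by rewrite !qk !mod_IirrE // quotientS.
  have ntDq : ((G / M)%G)^`(1)%g :!=: 1%g by rewrite -qD quotient_neq1.
  have [fa fb] := forward chainQ ntDq.
  rewrite (chief_minnormal nsMG sMD).
  case: (boolP (minnormal _ _)) => m; [right|left]; split => //.
  + exact: fb.
  + exact: fa.
- move=> H2 i j ni nj; apply/negPn/negP; rewrite negb_or => /andP[nij nji].
  have nsMG : ((cfker ('chi[G]_i)%R :&: cfker ('chi[G]_j)%R :&: G^`(1))%G <| G)%g.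
    by rewrite !normalI ?cfker_normal ?der_normal.
  set M := (cfker _ :&: _ :&: _)%G in nsMG.
  have nMG := normal_norm nsMG.
  have nDi : ~~ (G^`(1)%g \subset cfker ('chi[G]_i)%R) by rewrite -nonlinE.
  have nDj : ~~ (G^`(1)%g \subset cfker ('chi[G]_j)%R) by rewrite -nonlinE.
  have sMD : (M \subset G^`(1))%g by rewrite subsetIr.
  have sMi : (M \subset cfker ('chi[G]_i)%R).
    exact: subset_trans (subsetIl _ _) (subsetIl _ _).
  have sMj : (M \subset cfker ('chi[G]_j)%R).
    exact: subset_trans (subsetIl _ _) (subsetIr _ _).
  have ltMD : (M \proper G^`(1))%g.
    rewrite properE sMD /=; apply: contra nDi => sDM.
    exact: subset_trans sDM sMi.
  have Hyp := H2 M nsMG ltMD; rewrite (chief_minnormal nsMG sMD) in Hyp.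
  have qD : (G^`(1) / M)%g = ((G / M)^`(1))%g := quotient_der 1 nMG.
  have ki : cfker ('chi[(G / M)%G]_(quo_Iirr M i))%R = (cfker ('chi[G]_i)%R / M)%g.
    by rewrite quo_IirrE // cfker_quo.
  have kj : cfker ('chi[(G / M)%G]_(quo_Iirr M j))%R = (cfker ('chi[G]_j)%R / M)%g.
    by rewrite quo_IirrE // cfker_quo.
  have nKM (k : Iirr G) : (cfker ('chi[G]_k)%R \subset 'N(M))%g.
    exact: subset_trans (cfker_sub _) nMG.
  have nDM : (G^`(1) \subset 'N(M))%g := subset_trans (der_sub 1 G) nMG.
  apply: (@backward _ (G / M)%G (quo_Iirr M i) (quo_Iirr M j) _ _ _ _ _ Hyp).
  + by rewrite ki -qD quotientSGK.
  + by rewrite kj -qD quotientSGK.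
  + by rewrite ki kj quotientSGK.
  + by rewrite ki kj quotientSGK.
  rewrite ki kj -qD -quotientGI // -quotientGI; last by rewrite subsetI sMi sMj.
  by rewrite trivg_quotient.
Qed.
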